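(* Let $X$ be a topological space with $|X|\ge 2$, $G$ an infinite Abelian group, and $f\colon G\to X$ a Korovin mapping. Then the Korovin orbit $G_f$ is a $T_3$-space if and only if $X$ is a $T_3$-space.
   Context: $X^G$ carries the product topology. For $f\in X^G$ and $g\in G$ let $gf\in X^G$ be given by $(gf)(x)=f(xg)$, and let $G_f=\{gf:g\in G\}\subseteq X^G$ with the subspace topology. The map $f\colon G\to X$ is a Korovin mapping if $\pi_M(G_f)=X^M$ for every countable $M\subseteq G$, where $\pi_M\colon X^G\to X^M$ is the projection; in that case $G_f$ is called a Korovin orbit. A space is $T_3$ if every open neighborhood $U$ of a point $x$ contains an open neighborhood $V$ of $x$ with $\overline{V}\subseteq U$ (no $T_1$ assumed). *)

(* Defs.v *)
From HB Require Import structures.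
From mathcomp Require Import all_boot all_order all_algebra.
From mathcomp Require Import all_classical all_reals all_analysis.
Set Implicit Arguments. Unset Strict Implicit. Unset Printing Implicit Defensive.
Import GRing.Theory.
Local Open Scope classical_set_scope.
Local Open Scope ring_scope.

(* T3 as in the paper (no T1): every open neighbourhood U of x contains an
   open neighbourhood V of x with closure V contained in U. *)
Definition T3_space (T : topologicalType) : Prop :=
  forall (x : T) (U : set T), open U -> U x ->
    exists V : set T, [/\ open V, V x, V `<=` U & closure V `<=` U].

Definition translate (G : zmodType) (X : Type) (f : G -> X) (g : G) : G -> X :=
  fun x => f (x + g).

Definition orbit_set (G : zmodType) (X : topologicalType) (f : G -> X)
  : set {ptws G -> X} := range (translate f).

(* Korovin mapping: for every countable M ⊆ G, π_M(G_f) = X^M, i.e. every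
   x-valued function on M is the restriction to M of some gf. *)
Definition korovin_mapping (G : zmodType) (X : Type) (f : G -> X) : Prop :=
  forall M : set G, countable M ->
    forall h : set_type M -> X,
      exists g : G, forall m : set_type M, translate f g (set_val m) = h m.

(* Main.v *)
Require Import Defs.
From HB Require Import structures.
From mathcomp Require Import all_boot all_order all_algebra.
From mathcomp Require Import all_classical all_reals all_analysis.
Local Open Scope classical_set_scope.
Local Open Scope ring_scope.

Lemma ptws_cvg (I : Type) (X : topologicalType) (F : set_system {ptws I -> X}) (p : {ptws I -> X}) :
  Filter F -> (forall i, (fun q : I -> X => q i) @ F --> p i) -> F --> p.
Proof.
move=> FF H.
apply/(@cvg_sup _ I (fun i => Topological.class
    (initial_topology (fun f : (I -> X) => f i))) F p FF) => i A /=.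
move=> [B [oB Bp BA]].
case: oB => C oC CB.
have := H i C; rewrite -CB in Bp.
have : nbhs (p i) C by apply: open_nbhs_nbhs.
move=> /[swap]/[apply]; rewrite /= nbhs_simpl.
rewrite nbhs_filterE => FC; apply: (@filterS _ F FF _ _ _ FC) => q Cq.
apply: BA; rewrite -CB; exact: Cq.
Qed.

Lemma settype_cvg (T : topologicalType) (A : set T) (F : set_system (set_type A))
  (p : set_type A) : Filter F -> set_val @ F --> set_val p -> F --> p.
Proof.
move=> FF H B /=.
rewrite nbhsE /= => -[C [oC Cp CB]].
case: oC => D oD DC.
have nD : nbhs (set_val p) D by apply: open_nbhs_nbhs; split => //; rewrite -DC in Cp.
have := H D nD; rewrite /= nbhs_simpl => FD.
rewrite nbhs_filterE; apply: (@filterS _ F FF _ _ _ FD) => q Dq.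
apply: CB; rewrite -DC; exact: Dq.
Qed.

Lemma closure_preimage_sub (S T : topologicalType) (f : S -> T) (A : set T) :
  continuous f -> closure (f @^-1` A) `<=` f @^-1` closure A.
Proof.
move=> cf x cx B nB.
have [y [Ay By]] := cx _ (cf x B nB).
by exists (f y).
Qed.

Definition regP (T : topologicalType) := forall (x : T) U, nbhs x U ->
  exists W, nbhs x W /\ closure W `<=` U.

Lemma reg_initial (S : topologicalType) (I : Type) (T : I -> topologicalType)
  (f : forall i, S -> T i) :
  (forall i, continuous (f i)) -> (forall i, regP (T i)) ->
  (forall (F : set_system S) s, Filter F -> (forall i, f i @ F --> f i s) -> F --> s) ->
  regP S.
Proof.
move=> cf rT cv x U xU.
pose H : set_system S := [set A : set S | exists W, nbhs x W /\ closure W `<=` A].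
have FH : Filter H.
  constructor.
  - by exists setT; split; [exact: filterT|].
  - move=> A B [W1 [n1 c1]] [W2 [n2 c2]]; exists (W1 `&` W2); split.
      exact: filterI.
    by move=> y /closureI [/c1 ? /c2 ?]; split.
  - move=> A B AB [W [n c]]; exists W; split=> //; exact: subset_trans AB.
have : H --> x.
  apply: (cv H x FH) => i N nN.
  have [N' [nN' cN']] := rT i _ _ nN.
  exists (f i @^-1` N'); split; first exact: cf.
  by move=> y /(@closure_preimage_sub _ _ _ _ (cf i)) /cN'.
by move=> /(_ U xU).
Qed.

Lemma T3_regP (T : topologicalType) : T3_space T <-> regP T.
Proof.
split.
  move=> h x U xU; have := xU; rewrite {1}nbhsE => -[U' [oU' U'x] U'U].
  have [V [oV Vx VU' cV]] := h x U' oU' U'x.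
  exists V; split; first by apply: open_nbhs_nbhs; split.
  exact: subset_trans U'U.
move=> h x U oU Ux.
have [W [nW cW]] := h x U (ltac:(by apply: open_nbhs_nbhs; split)).
exists (W°); split.
- exact: open_interior.
- exact: nW.
- apply: subset_trans cW; apply: subset_trans (@subset_closure _ W).
  exact: interior_subset.
- apply: subset_trans cW; apply: closureS; exact: interior_subset.
Qed.

Lemma ptws_nbhs_box (I : eqType) (X : topologicalType) (p : {ptws I -> X})
  (B : set {ptws I -> X}) : nbhs p B ->
  exists (s : seq I) (N : I -> set X), (forall a, nbhs (p a) (N a)) /\
    (forall q : I -> X, (forall a, a \in s -> N a (q a)) -> B q).
Proof.
pose Phi : set_system {ptws I -> X} := [set A | exists (s : seq I) (N : I -> set X),
  (forall a, nbhs (p a) (N a)) /\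
    (forall q : I -> X, (forall a, a \in s -> N a (q a)) -> A q)].
have FP : Filter Phi.
  constructor.
  - by exists [::], (fun _ => setT); split => // a; exact: filterT.
  - move=> A1 A2 [s1 [N1 [n1 h1]]] [s2 [N2 [n2 h2]]].
    exists (s1 ++ s2), (fun a => N1 a `&` N2 a); split.
      by move=> a; apply: filterI.
    move=> q hq; split.
      by apply: h1 => a ha; move: (hq a); rewrite mem_cat ha => /(_ isT) [].
    by apply: h2 => a ha; move: (hq a); rewrite mem_cat ha orbT => /(_ isT) [].
  - move=> A1 A2 A12 [s [N [n h]]]; exists s, N; split => // q /h; exact: A12.
have : Phi --> p.
  apply: (@ptws_cvg I X Phi p FP) => i M nM.
  exists [:: i], (fun a => if a == i then M else setT); split.
    by move=> a; case: eqP => [->//|_]; exact: filterT.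
  by move=> q /(_ i); rewrite mem_seq1 eqxx; apply.
by move=> /[apply].
Qed.

Lemma korovin_seq (G : zmodType) (X : Type) (f : G -> X) : korovin_mapping f ->
  forall (s : seq G) (h : G -> X), exists g, forall a, a \in s -> translate f g a = h a.
Proof.
move=> K s h.
have cM : countable [set` s] by apply: finite_set_countable; exact: finite_seq.
have [g hg] := K _ cM (fun m => h (set_val m)).
exists g => a ha.
have Ma : a \in [set` s] by apply: mem_set.
have := hg (@exist _ _ a Ma).
by rewrite set_valE.
Qed.

Lemma settype_continuous (T : topologicalType) (A : set T) :
  continuous (set_val : set_type A -> T).
Proof. exact: (@initial_continuous (set_type A) T set_val). Qed.

Theorem proposition4p4 (X : topologicalType) (G : zmodType) (f : G -> X) :
  (exists x y : X, x <> y) ->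
  infinite_set [set: G] ->
  korovin_mapping f ->
  (T3_space (set_type (orbit_set f)) <-> T3_space X).
Proof.
move=> _ _ K; rewrite !T3_regP; split; last first.
  move=> rX.
  have rP : regP {ptws G -> X}.
    apply: (@reg_initial _ G (fun _ => X) (fun i (q : {ptws G -> X}) => q i)).
    - by move=> i; exact: (@proj_continuous G (fun _ => X) i).
    - by move=> i; exact: rX.
    - by move=> F s FF; exact: ptws_cvg.
  apply: (@reg_initial _ unit (fun _ => {ptws G -> X}) (fun _ => set_val)).
  - by move=> _; exact: settype_continuous.
  - by move=> _; exact: rP.
  - by move=> F s FF /(_ tt); exact: settype_cvg.
move=> rG x U xU.
have orb : forall g, orbit_set f (translate f g) by move=> g; exists g.
pose mk g : set_type (orbit_set f) := @exist _ _ (translate f g) (mem_set (orb g)).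
have mkE : forall g, set_val (mk g) = translate f g by move=> g; rewrite set_valE.
have [g hg] := korovin_seq _ _ _ K [:: 0] (fun _ => x).
have px : translate f g 0 = x by apply: hg; rewrite inE.
have nO : nbhs (mk g) (set_val @^-1` [set q : {ptws G -> X} | U (q 0)]).
  apply: settype_continuous; rewrite mkE.
  apply: (@proj_continuous G (fun _ => X) 0); rewrite /proj /= px; exact: xU.
have [W [nW cW]] := rG _ _ nO.
have := nW; rewrite {1}nbhsE => -[C [oC Cg] CW].
case: oC => D oD DC.
have nD : nbhs (translate f g : {ptws G -> X}) D.
  by apply: open_nbhs_nbhs; split => //; rewrite -mkE; rewrite -DC in Cg.
have [s [N [nN hN]]] := ptws_nbhs_box _ _ _ _ nD.
exists (N 0); split; first by have := nN 0; rewrite px.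
move=> y cy.
have [k hk] := korovin_seq _ _ _ K (0 :: s) (fun a => if a == 0 then y else translate f g a).
have k0 : translate f k 0 = y by rewrite hk ?inE ?eqxx.
suff : closure W (mk k) by move/cW; rewrite /= mkE k0.
move=> B nB.
have := nB; rewrite {1}nbhsE => -[C' [oC' Ck] C'B].
case: oC' => D' oD' DC'.
have nD' : nbhs (translate f k : {ptws G -> X}) D'.
  by apply: open_nbhs_nbhs; split => //; rewrite -mkE; rewrite -DC' in Ck.
have [s' [N' [nN' hN']]] := ptws_nbhs_box _ _ _ _ nD'.
have [z [Nz N'z]] : N 0 `&` N' 0 !=set0 by apply: cy; rewrite -k0; exact: nN'.
have [k' hk'] := korovin_seq _ _ _ K (0 :: s ++ s')
  (fun a => if a == 0 then z else if a \in s then translate f g a else translate f k a).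
exists (mk k'); split.
- apply: CW; rewrite -DC /= mkE; apply: hN => a ha.
  rewrite hk'; last by rewrite inE mem_cat ha orbT.
  case: eqP => [->//|_]; rewrite ha; exact: nbhs_singleton.
- apply: C'B; rewrite -DC' /= mkE; apply: hN' => a ha.
  rewrite hk'; last by rewrite inE mem_cat ha !orbT.
  case: eqP => [->//|a0]; case: ifP => as0; last exact: nbhs_singleton.
  have := nbhs_singleton (nN' a); rewrite hk; last by rewrite inE as0 orbT.
  by case: eqP.
Qed.
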